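(* Let $\mathcal{R}=(\mathcal{S},R_1,\ldots,R_k)$ be a relational structure (all arities $n_i\ge2$) with a relational message passing model as in the context satisfying the Bounded Jacobians assumption, and let $\mathcal{G}=\mathcal{G}(\mathcal{S},\mathbf{B})$ with weights $w$. Let $\sigma,\tau\in\mathcal{S}$ be such that $w_{\sigma\to\tau}>0$, and assume $w^3_{\max}>0$. Then $$\left\Vert \frac{\partial \mathbf{h}_{\sigma}^{(2)}}{\partial \mathbf{h}_{\tau}^{(0)}} \right\Vert_{1} \leq \left( \prod_{\ell=0}^{1} \alpha^{(\ell)} \beta^{(\ell)} \right) w_{\tau}^{\mathrm{out}} w_{\sigma}^{\mathrm{in}} \left(1 - \frac{w_{\sigma \to \tau}}{w_{\max}^3} \bigl(1 - k(\sigma, \tau)\bigr)\right),$$ where $k(\sigma,\tau)$ is the Ollivier–Ricci curvature of the edge $\sigma\to\tau$ in $\mathcal{G}$.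
   Context: A relational structure $\mathcal{R}=(\mathcal{S},R_1,\ldots,R_k)$ consists of a finite set $\mathcal{S}$ of entities and relations $R_i\subseteq\mathcal{S}^{n_i}$ of arity $n_i$; throughout, $n_i\ge 2$ for all $i$. A relational message passing model on $\mathcal{R}$ consists of: feature vectors $\mathbf{h}_\sigma^{(t)}\in\mathbb{R}^{p_t}$ for $\sigma\in\mathcal{S}$, $t\ge 0$, with $\mathbf{h}_\sigma^{(0)}=\mathbf{x}_\sigma$ the input features (all later features are regarded as functions of the input features); message functions $\boldsymbol{\psi}_i^{(t)}:(\mathbb{R}^{p_t})^{n_i}\to\mathbb{R}^{p_{i,t}}$; update functions $\boldsymbol{\phi}^{(t)}:\mathbb{R}^{p_{1,t}}\times\cdots\times\mathbb{R}^{p_{k,t}}\to\mathbb{R}^{p_{t+1}}$; and shift operators $\mathbf{A}^{R_i}\in\mathbb{R}_{\ge 0}^{\mathcal{S}^{n_i}}$ with $\mathbf{A}^{R_i}_{\zeta_1,\ldots,\zeta_{n_i}}=0$ whenever $(\zeta_1,\ldots,\zeta_{n_i})\notin R_i$. The update rule is $\mathbf{h}_\sigma^{(t+1)}=\boldsymbol{\phi}^{(t)}(\mathbf{m}_{\sigma,1}^{(t)},\ldots,\mathbf{m}_{\sigma,k}^{(t)})$ with $\mathbf{m}_{\sigma,i}^{(t)}=\sum_{\boldsymbol{\xi}\in\mathcal{S}^{n_i-1}}\mathbf{A}^{R_i}_{\sigma,\boldsymbol{\xi}}\,\boldsymbol{\psi}_i^{(t)}(\mathbf{h}_\sigma^{(t)},\mathbf{h}_{\xi_1}^{(t)},\ldots,\mathbf{h}_{\xi_{n_i-1}}^{(t)})$.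 Aggregated influence matrix: $\tilde{\mathbf{A}}^{R_i}_{\sigma,\tau}=\sum_{j=1}^{n_i-1}\sum_{\boldsymbol{\xi}\in\mathcal{S}^{n_i-2}}\mathbf{A}^{R_i}_{\sigma,\xi_1,\ldots,\xi_{j-1},\tau,\xi_j,\ldots,\xi_{n_i-2}}$, $\tilde{\mathbf{A}}=\sum_{i=1}^k\tilde{\mathbf{A}}^{R_i}$; $\gamma=\max_{\sigma}\sum_{\tau}\tilde{\mathbf{A}}_{\sigma,\tau}$; augmented influence matrix $\mathbf{B}=\gamma\mathbf{I}+\tilde{\mathbf{A}}$. Influence graph $\mathcal{G}(\mathcal{S},\mathbf{B})$: weighted directed graph on $\mathcal{S}$ with an edge $\xi\to\eta$ (self-loops allowed) iff $\mathbf{B}_{\eta,\xi}>0$, of weight $w_{\xi\to\eta}=\mathbf{B}_{\eta,\xi}$; write $w_{\xi\to\eta}=0$ if there is no edge. $w_\xi^{\mathrm{out}}=\sum_\eta w_{\xi\to\eta}$, $w_\eta^{\mathrm{in}}=\sum_\xi w_{\xi\to\eta}$. Ollivier–Ricci curvature of a directed edge $\sigma\to\tau$ with $w_{\sigma\to\tau}>0$: define probability measures $\mu_\tau^{\mathrm{out}}(\xi)=w_{\tau\to\xi}/w_\tau^{\mathrm{out}}$ and $\mu_\sigma^{\mathrm{in}}(\xi)=w_{\xi\to\sigma}/w_\sigma^{\mathrm{in}}$ on $\mathcal{S}$; let $d(\xi,\eta)$ be the shortest directed path distance from $\xi$ to $\eta$ in $\mathcal{G}$ using edge weights as lengths ($d(\xi,\xi)=0$);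 $W(\mu,\nu)=\inf_{\pi}\sum_{\xi,\eta}\pi(\xi,\eta)d(\xi,\eta)$ over couplings $\pi$ of $\mu,\nu$; and $k(\sigma,\tau)=1-W(\mu_\sigma^{\mathrm{in}},\mu_\tau^{\mathrm{out}})/w_{\sigma\to\tau}$. $w^3_{\max}$ is the maximum weighted length of a $3$-step path from an in-neighbour of $\sigma$ to an out-neighbour of $\tau$ through the edge $\sigma\to\tau$: $w^3_{\max}=\max\{w_{\xi\to\sigma}+w_{\sigma\to\tau}+w_{\tau\to\eta} : w_{\xi\to\sigma}>0,\ w_{\tau\to\eta}>0\}$. Bounded Jacobians assumption: every $\boldsymbol{\psi}_i^{(\ell)}$ and $\boldsymbol{\phi}^{(\ell)}$ is differentiable, the Jacobian of $\boldsymbol{\psi}_i^{(\ell)}$ with respect to any one of its vector arguments has induced $1$-norm at most $\beta_i^{(\ell)}$ everywhere, and the Jacobian of $\boldsymbol{\phi}^{(\ell)}$ with respect to any one message argument has induced $1$-norm at most $\alpha^{(\ell)}$ everywhere; $\beta^{(\ell)}=\max_i\beta_i^{(\ell)}$. $\|\cdot\|_1$ is the induced matrix $1$-norm (maximum absolute column sum). *)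

(* Defs.v *)
From HB Require Import structures.
From mathcomp Require Import all_boot all_order all_algebra.
From mathcomp Require Import all_classical all_reals all_analysis.
Unset Printing Implicit Defensive.
Import Order.TTheory GRing.Theory Num.Theory.
Import numFieldNormedType.Exports.
Local Open Scope ring_scope.
Local Open Scope classical_set_scope.

Section Defs.
Context {R : realType}.

Definition norm1 {a b : nat} (M : 'M[R]_(a, b)) : R :=
  \big[Num.max/0]_(j < b) \sum_(i < a) `|M i j|.

(** Standard Jacobian matrix (rows = output coordinates, columns = input
    coordinates) of f at x.  The library's [jacobian] is the transpose
    (it acts on row vectors: v *m jacobian f x = 'd f x v). *)
Definition jac {a b : nat} (f : 'rV[R]_a -> 'rV[R]_b) (x : 'rV[R]_a) : 'M[R]_(b, a) :=
  (jacobian f x)^T.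

Definition upd {I : eqType} {T : Type} (a : I -> T) (j : I) (v : T) : I -> T :=
  fun j' => if j' == j then v else a j'.

Context {S : finType} {k : nat} {m : 'I_k -> nat}.
(* Relation R_i has arity n_i = (m i).+2 (so n_i >= 2); a tuple in S^{n_i}
   is a finite function 'I_(m i).+2 -> S. *)
Variable (A : forall i : 'I_k, {ffun 'I_(m i).+2 -> S} -> R).

Definition consf {n : nat} (s : S) (xi : {ffun 'I_n.+1 -> S}) : {ffun 'I_n.+2 -> S} :=
  [ffun j => if unlift ord0 j is Some j' then xi j' else s].

Definition aggA (i : 'I_k) (s t : S) : R :=
  \sum_(j < (m i).+1) \sum_(xi : {ffun 'I_(m i).+1 -> S} | xi j == t) A i (consf s xi).

Definition Atot (s t : S) : R := \sum_(i < k) aggA i s t.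

Definition gamma : R := \big[Num.max/0]_(s : S) \sum_(t : S) Atot s t.

Definition Bmat (s t : S) : R := (if s == t then gamma else 0) + Atot s t.

(** Weight of the edge x -> y of the influence graph: B_{y,x} (0 if no edge). *)
Definition w (x y : S) : R := Bmat y x.

Definition wout (x : S) : R := \sum_(y : S) w x y.
Definition win (y : S) : R := \sum_(x : S) w x y.

(** Weighted length of the directed walk x = v_0 -> v_1 -> ... -> v_r, p = [v_1;...;v_r]. *)
Definition walk_len (x : S) (p : seq S) : R := \sum_(e <- zip (x :: p) p) w e.1 e.2.

Definition dist (x y : S) : R :=
  inf [set L : R | exists p : seq S,
         [/\ path (fun a b => 0 < w a b) x p, last x p = y & L = walk_len x p]].

Definition coupling (pi : S -> S -> R) (mu nu : S -> R) : Prop :=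
  [/\ forall a b, 0 <= pi a b,
      forall a, \sum_(b : S) pi a b = mu a
    & forall b, \sum_(a : S) pi a b = nu b].

Definition wass (mu nu : S -> R) : R :=
  inf [set c : R | exists pi : S -> S -> R,
         coupling pi mu nu /\ c = \sum_(a : S) \sum_(b : S) pi a b * dist a b].

Definition mu_out (t : S) : S -> R := fun x => w t x / wout t.
Definition mu_in (s : S) : S -> R := fun x => w x s / win s.

Definition curv (s t : S) : R := 1 - wass (mu_in s) (mu_out t) / w s t.

Definition w3max (s t : S) : R :=
  \big[Num.max/0]_(x : S | 0 < w x s) \big[Num.max/0]_(y : S | 0 < w t y)
     (w x s + w s t + w t y).

Context {p : nat -> nat} {q : nat -> 'I_k -> nat}.
Variable psi : forall (l : nat) (i : 'I_k), ('I_(m i).+2 -> 'rV[R]_(p l)) -> 'rV[R]_(q l i).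
Variable phi : forall l : nat, (forall i : 'I_k, 'rV[R]_(q l i)) -> 'rV[R]_(p l.+1).

Fixpoint feat (x : S -> 'rV[R]_(p 0%N)) (l : nat) {struct l} : S -> 'rV[R]_(p l) :=
  match l as l0 return S -> 'rV[R]_(p l0) with
  | 0%N => x
  | l'.+1 => fun s => phi l' (fun i =>
      \sum_(xi : {ffun 'I_(m i).+1 -> S})
         A i (consf s xi) *: psi l' i (fun j => feat x l' (consf s xi j)))
  end.

End Defs.

(* Main.v *)
Require Import Defs.
From HB Require Import structures.
From mathcomp Require Import all_boot all_order all_algebra.
From mathcomp Require Import all_classical all_reals all_analysis.
From mathcomp Require Import ring lra.
Import Order.TTheory GRing.Theory Num.Theory.
Import numFieldNormedType.Exports.
Local Open Scope ring_scope.

Section H.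
Context {R : realType}.

Definition n1 {n : nat} (v : 'rV[R]_n) : R := \sum_i `|v 0 i|.

Lemma n1_ge0 n (v : 'rV[R]_n) : 0 <= n1 v.
Proof. by apply: sumr_ge0 => i _. Qed.

Lemma n1D n (u v : 'rV[R]_n) : n1 (u + v) <= n1 u + n1 v.
Proof. rewrite /n1 -big_split /=; apply: ler_sum => i _; rewrite mxE; exact: ler_normD. Qed.

Lemma n1Z n a (v : 'rV[R]_n) : n1 (a *: v) = `|a| * n1 v.
Proof. rewrite /n1 mulr_sumr; apply: eq_bigr => i _; by rewrite mxE normrM. Qed.

Lemma n10 n : n1 (0 : 'rV[R]_n) = 0.
Proof. by rewrite /n1 big1 // => i _; rewrite mxE normr0. Qed.

Lemma n1_sum n (I : Type) (s : seq I) (f : I -> 'rV[R]_n) :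
  n1 (\sum_(i <- s) f i) <= \sum_(i <- s) n1 (f i).
Proof.
elim: s => [|a s IH]; first by rewrite !big_nil n10.
rewrite !big_cons. apply: le_trans. apply: n1D. exact: lerD.
Qed.

Lemma jac_le a b (L : {linear 'rV[R]_a -> 'rV[R]_b}) c :
  norm1 ((lin1_mx L)^T) <= c -> forall v, n1 (L v) <= c * n1 v.
Proof.
move=> H v.
have vE : v = \sum_(j < a) v 0 j *: delta_mx 0 j.
  apply/rowP => j; rewrite summxE (bigD1 j) //= big1 ?addr0.
    by rewrite !mxE !eqxx mulr1.
  by move=> i /negbTE ne; rewrite !mxE eq_sym ne andbF mulr0.
rewrite [in n1 (L v)]vE linear_sum /=.
apply: le_trans; first exact: n1_sum.
rewrite [X in _ <= c * X]/n1 mulr_sumr.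
apply: ler_sum => j _; rewrite linearZ /= -/(n1 _) n1Z mulrC ler_wpM2r //.
apply: le_trans H.
rewrite /norm1; apply: le_trans (le_bigmax _ _ j).
rewrite /n1 le_eqVlt; apply/orP; left; apply/eqP.
by rewrite /n1; apply: eq_bigr => i _; rewrite !mxE.
Qed.

Lemma le_jac a b (L : {linear 'rV[R]_a -> 'rV[R]_b}) c :
  0 <= c -> (forall v, n1 (L v) <= c * n1 v) -> norm1 ((lin1_mx L)^T) <= c.
Proof.
move=> c0 H; apply: bigmax_le => // j _.
have := H (delta_mx 0 j).
have -> : n1 (delta_mx 0 j : 'rV[R]_a) = 1.
  rewrite /n1 (bigD1 j) //= big1 ?addr0; first by rewrite mxE !eqxx normr1.
  by move=> i /negbTE ne; rewrite mxE ne andbF normr0.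
rewrite mulr1 => h; apply: le_trans h; rewrite le_eqVlt; apply/orP; left; apply/eqP.
by rewrite /n1; apply: eq_bigr => i _; rewrite !mxE.
Qed.


Lemma cont_sum (T : topologicalType) (W : normedModType R) (I : Type) (s : seq I)
  (g : I -> T -> W) : (forall i, continuous (g i)) ->
  continuous (fun x => \sum_(i <- s) g i x).
Proof.
move=> Hg; elim: s => [|a s IH].
  have -> : (fun x : T => \sum_(i <- [::]) g i x) = cst 0.
    by apply: funext => x; rewrite big_nil.
  exact: cst_continuous.
have -> : (fun x : T => \sum_(i <- a :: s) g i x) =
   (g a) + (fun x => \sum_(i <- s) g i x).
  by apply: funext => x; rewrite big_cons.
move=> x; apply: continuousD; [exact: Hg | exact: IH].
Qed.

Lemma lin_cont a b (W : normedModType R) (f : {linear 'M[R]_(a, b) -> W}) :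
  continuous f.
Proof.
have -> : (f : _ -> _) = fun M => \sum_(i < a) \sum_(j < b) M i j *: f (delta_mx i j).
  apply: funext => M; rewrite {1}(matrix_sum_delta M) linear_sum.
  by apply: eq_bigr => i _; rewrite linear_sum; apply: eq_bigr => j _; rewrite linearZ.
apply: cont_sum => i; apply: cont_sum => j x.
apply: continuousZr_tmp; exact: coord_continuous.
Qed.

Lemma affine_diff a b (W : normedModType R) (L : {linear 'M[R]_(a, b) -> W}) (C : W) x :
  differentiable (fun y => C + L y) x /\ 'd (fun y => C + L y) x = L :> (_ -> _).
Proof.
have E : (fun y => C + L y) = cst C + (L : _ -> _) by [].
have dL : differentiable L x by apply: linear_differentiable; exact: lin_cont.
rewrite E; split; first exact: differentiableD.
rewrite diffD // diff_cst diff_lin; last exact: lin_cont.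
by apply: funext => y /=; rewrite add0r.
Qed.

Lemma diff_sum (V W : normedModType R) (I : Type) (s : seq I) (f : I -> V -> W) x :
  (forall i, differentiable (f i) x) ->
  differentiable (fun y => \sum_(i <- s) f i y) x /\
  'd (fun y => \sum_(i <- s) f i y) x = (fun h => \sum_(i <- s) 'd (f i) x h) :> (_ -> _).
Proof.
move=> Hf; elim: s => [|a s [IH1 IH2]].
  have -> : (fun y : V => \sum_(i <- [::]) f i y) = cst 0.
    by apply: funext => y; rewrite big_nil.
  split; first exact: differentiable_cst.
  by rewrite diff_cst; apply: funext => h; rewrite big_nil.
have -> : (fun y => \sum_(i <- a :: s) f i y) = (f a) + (fun y => \sum_(i <- s) f i y).
  by apply: funext => y; rewrite big_cons.
split; first exact: differentiableD.
rewrite (diffD (Hf a) IH1).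
apply: funext => h /=.
rewrite big_cons; congr (_ + _); exact: (congr1 (fun F => F h) IH2).
Qed.


Definition Pj (n : nat) (d : 'I_n -> nat) (j : 'I_n) : 'M[R]_(d j, \sum_(j' < n) d j') :=
  @mxrow R n d (d j) (fun j' => @dfwith _ (fun j0 => 'M[R]_(d j, d j0)) (fun j0 => 0) j (1%:M) j').
Arguments Pj {n} d j.

Lemma subPj n (d : 'I_n -> nat) j (y : 'rV[R]_(d j)) j' :
  submxrow (y *m Pj d j) j' = @dfwith _ (fun j0 => 'rV[R]_(d j0)) (fun j0 => 0) j y j'.
Proof.
rewrite /Pj mul_mxrow mxrowK; case: (eqVneq j j') => [<-|ne].
  by rewrite /dfwith; case: eqP => // e; rewrite eq_axiomK /= mulmx1.
by rewrite /dfwith; case: eqP => [e|_]; [rewrite e eqxx in ne | rewrite mulmx0].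
Qed.

Lemma GEN (n b c : nat) (d : 'I_n -> nat) (F : (forall j : 'I_n, 'rV[R]_(d j)) -> 'rV[R]_b)
  (beta : R) (G : forall j, 'rV[R]_c -> 'rV[R]_(d j)) (K : 'I_n -> R) (v0 : 'rV[R]_c) :
  (forall N : 'rV[R]_(\sum_j d j),
     differentiable (fun N' : 'rV[R]_(\sum_j d j) => F (fun j => submxrow N' j)) N) ->
  (forall (a : forall j, 'rV[R]_(d j)) j,
     norm1 (jac (fun y => F (@dfwith _ (fun j0 => 'rV[R]_(d j0)) a j y)) (a j)) <= beta) ->
  0 <= beta ->
  (forall j, differentiable (G j) v0) ->
  (forall j h, n1 ('d (G j) v0 h) <= K j * n1 h) ->
  differentiable (fun v => F (fun j => G j v)) v0 /\
  forall h, n1 ('d (fun v => F (fun j => G j v)) v0 h) <= beta * (\sum_j K j) * n1 h.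
Proof.
move=> HF HB b0 HG HK.
pose Fm := fun N' : 'rV[R]_(\sum_j d j) => F (fun j => submxrow N' j).
pose T := fun v => \sum_j G j v *m Pj d j.
have subT v j' : submxrow (T v) j' = G j' v.
  rewrite submxrow_sum (bigD1 j') //= subPj dfwithin big1 ?addr0 // => j ne.
  by rewrite subPj dfwithout.
have FT : (fun v => F (fun j => G j v)) = Fm \o T.
  apply: funext => v; rewrite /Fm /=; congr F; apply: functional_extensionality_dep => j.
  by rewrite subT.
have dGP j : differentiable (fun v => G j v *m Pj d j) v0 /\
    'd (fun v => G j v *m Pj d j) v0 = (fun h => 'd (G j) v0 h *m Pj d j) :> (_ -> _).
  have -> : (fun v => G j v *m Pj d j) = mulmxr (Pj d j) \o G j by [].
  have dM : differentiable (mulmxr (Pj d j)) (G j v0).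
    by apply: linear_differentiable; exact: lin_cont.
  split; first exact: differentiable_comp.
  by rewrite diff_comp // diff_lin //; exact: lin_cont.
have [dT dTE] := @diff_sum _ _ _ (index_enum 'I_n) (fun j v => G j v *m Pj d j) v0 (fun j => (dGP j).1).
have dF : differentiable Fm (T v0) by exact: HF.
rewrite FT; split; first exact: differentiable_comp.
have Hj j z : n1 ('d Fm (T v0) (z *m Pj d j)) <= beta * n1 z.
  pose a := fun j => G j v0.
  pose Cj := T v0 - a j *m Pj d j.
  have E : (fun y => F (@dfwith _ (fun j0 => 'rV[R]_(d j0)) a j y)) =
           Fm \o (fun y => Cj + mulmxr (Pj d j) y).
    apply: funext => y; rewrite /Fm /=; congr F; apply: functional_extensionality_dep => j'.
    rewrite submxrowD submxrowB subT !subPj.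
    case: (eqVneq j j') => [<-|ne].
      by rewrite !dfwithin /a subrr add0r.
    by rewrite !dfwithout // subr0 addr0.
  have [dA dAE] := @affine_diff _ _ _ (mulmxr (Pj d j)) Cj (a j).
  have aT : Cj + mulmxr (Pj d j) (a j) = T v0 by rewrite /Cj /= subrK.
  have H := @jac_le _ _ _ _ (HB a j) z.
  rewrite E diff_comp // in H.
  by rewrite /= dAE /= aT in H.
move=> h; rewrite diff_comp //= {1}/T dTE linear_sum /=.
apply: le_trans; first exact: n1_sum.
rewrite -mulrA mulr_suml mulr_sumr; apply: ler_sum => j _ /=; rewrite (dGP j).2.
apply: le_trans; first exact: Hj.
apply: ler_wpM2l => //; exact: HK.
Qed.

Lemma Lrow_lin nn b :
  linear (fun N' : 'rV[R]_(\sum_(j < nn) b) => (\matrix_j (@submxrow R nn (fun _ => b) 1 N' j) : 'M[R]_(nn, b))).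
Proof.
move=> a x y; apply/row_matrixP => r; rewrite linearP !rowK /=.
by apply/rowP => cc; rewrite !mxE.
Qed.

End H.

Section P.
Context {R : realType}.
Lemma PSI (nn b e c : nat) (F : ('I_nn -> 'rV[R]_b) -> 'rV[R]_e) (beta : R)
  (G : 'I_nn -> 'rV[R]_c -> 'rV[R]_b) (K : 'I_nn -> R) (v0 : 'rV[R]_c) :
  (forall M : 'M[R]_(nn, b), differentiable (fun M' : 'M[R]_(nn, b) => F (fun j => row j M')) M) ->
  (forall (a : 'I_nn -> 'rV[R]_b) j, norm1 (jac (fun v => F (upd a j v)) (a j)) <= beta) ->
  0 <= beta ->
  (forall j, differentiable (G j) v0) ->
  (forall j h, n1 ('d (G j) v0 h) <= K j * n1 h) ->
  differentiable (fun v => F (fun j => G j v)) v0 /\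
  forall h, n1 ('d (fun v => F (fun j => G j v)) v0 h) <= beta * (\sum_j K j) * n1 h.
Proof.
move=> HF HB b0 HG HK.
apply: (@GEN R nn e c (fun _ => b) F beta G K v0 _ _ b0 HG HK).
  move=> N.
  pose Lrow := fun N' : 'rV[R]_(\sum_(j < nn) b) => (\matrix_j (@submxrow R nn (fun _ => b) 1 N' j) : 'M[R]_(nn, b)).
  have lin : linear Lrow by exact: Lrow_lin.
  pose LrowL : {linear _ -> 'M[R]_(nn, b)} := HB.pack Lrow (GRing.isLinear.Build _ _ _ _ Lrow lin).
  have -> : (fun N' : 'rV[R]_(\sum_(j < nn) b) => F (fun j => submxrow N' j)) =
      (fun M' : 'M[R]_(nn, b) => F (fun j => row j M')) \o LrowL.
    apply: funext => N' /=; congr F; apply: funext => j; by rewrite rowK.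
  apply: differentiable_comp; last exact: HF.
  by apply: linear_differentiable; exact: lin_cont.
move=> a j.
have -> : (fun y => F (@dfwith _ (fun _ => 'rV[R]_b) a j y)) = (fun y => F (upd a j y)).
  apply: funext => y; congr F; apply: funext => j'; rewrite /upd.
  case: (eqVneq j j') => [<-|ne]; first by rewrite dfwithin ?eqxx.
  by rewrite dfwithout // 1?eq_sym ?(negbTE ne).
exact: HB.
Qed.

End P.


Lemma LAYER (R : realType) (S : finType) (k : nat) (m : 'I_k -> nat)
  (A : forall i : 'I_k, {ffun 'I_(m i).+2 -> S} -> R)
  (p : nat -> nat) (q : nat -> 'I_k -> nat)
  (psi : forall (l : nat) (i : 'I_k), ('I_(m i).+2 -> 'rV[R]_(p l)) -> 'rV[R]_(q l i))
  (phi : forall l : nat, (forall i : 'I_k, 'rV[R]_(q l i)) -> 'rV[R]_(p l.+1))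
  (l : nat) (al : R) (be : 'I_k -> R) (c : nat) (g : S -> 'rV[R]_c -> 'rV[R]_(p l))
  (K : S -> R) (v0 : 'rV[R]_c) (s : S) :
  (forall i z, 0 <= A i z) ->
  (forall i (M : 'M[R]_((m i).+2, p l)),
      differentiable (fun M' : 'M[R]_((m i).+2, p l) => psi l i (fun j => row j M')) M) ->
  (forall (M : 'rV[R]_(\sum_(i < k) q l i)),
      differentiable (fun M' : 'rV[R]_(\sum_(i < k) q l i) =>
        phi l (fun i => @submxrow R k (q l) 1 M' i)) M) ->
  (forall i (a : 'I_(m i).+2 -> 'rV[R]_(p l)) (j : 'I_(m i).+2),
      norm1 (jac (fun v => psi l i (upd a j v)) (a j)) <= be i) ->
  (forall (a : forall i : 'I_k, 'rV[R]_(q l i)) (i : 'I_k),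
      norm1 (jac (fun v => phi l (@dfwith 'I_k (fun i0 => 'rV[R]_(q l i0)) a i v)) (a i))
        <= al) ->
  0 <= al -> (forall i, 0 <= be i) -> (forall u, 0 <= K u) ->
  (forall u, differentiable (g u) v0) ->
  (forall u h, n1 ('d (g u) v0 h) <= K u * n1 h) ->
  differentiable (fun v => phi l (fun i => \sum_(xi : {ffun 'I_(m i).+1 -> S})
         A i (consf s xi) *: psi l i (fun j => g (consf s xi j) v))) v0 /\
  forall h, n1 ('d (fun v => phi l (fun i => \sum_(xi : {ffun 'I_(m i).+1 -> S})
         A i (consf s xi) *: psi l i (fun j => g (consf s xi j) v))) v0 h)
     <= al * (\sum_i \sum_(xi : {ffun 'I_(m i).+1 -> S})
                 A i (consf s xi) * (be i * \sum_j K (consf s xi j))) * n1 h.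
Proof.
move=> A0 Hpsi Hphi Bpsi Bphi al0 be0 K0 Hg HgK.
have Hi i : differentiable (fun v => \sum_(xi : {ffun 'I_(m i).+1 -> S})
         A i (consf s xi) *: psi l i (fun j => g (consf s xi j) v)) v0 /\
     forall h, n1 ('d (fun v => \sum_(xi : {ffun 'I_(m i).+1 -> S})
         A i (consf s xi) *: psi l i (fun j => g (consf s xi j) v)) v0 h) <=
       (\sum_(xi : {ffun 'I_(m i).+1 -> S}) A i (consf s xi) * (be i * \sum_j K (consf s xi j))) * n1 h.
  have P xi := @PSI R _ _ _ _ (psi l i) (be i) (fun j => g (consf s xi j)) (fun j => K (consf s xi j)) v0
     (Hpsi i) (Bpsi i) (be0 i) (fun j => Hg _) (fun j => HgK _).
  have D xi : differentiable (fun v => A i (consf s xi) *: psi l i (fun j => g (consf s xi j) v)) v0 /\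
     'd (fun v => A i (consf s xi) *: psi l i (fun j => g (consf s xi j) v)) v0 =
     (fun h => A i (consf s xi) *: 'd (fun v => psi l i (fun j => g (consf s xi j) v)) v0 h) :> (_ -> _).
    have -> : (fun v => A i (consf s xi) *: psi l i (fun j => g (consf s xi j) v)) =
       A i (consf s xi) *: (fun v => psi l i (fun j => g (consf s xi j) v)) by [].
    split; first exact: differentiableZ (P xi).1.
    exact: (diffZ _ (P xi).1).
  have [dS dSE] := @diff_sum R _ _ _ (index_enum {ffun 'I_(m i).+1 -> S}) _ v0 (fun xi => (D xi).1).
  split; first exact: dS.
  move=> h; rewrite dSE /=.
  apply: le_trans; first exact: n1_sum.
  rewrite mulr_suml; apply: ler_sum => xi _; rewrite (D xi).2 /= n1Z ger0_norm // -mulrA.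
  apply: ler_wpM2l => //; exact: (P xi).2.
exact: (@GEN R k _ _ (q l) (phi l) al _ _ v0 Hphi Bphi al0 (fun i => (Hi i).1) (fun i => (Hi i).2)).
Qed.


Section C.
Context {R : realType} {S : finType} {k : nat} {m : 'I_k -> nat}.
Variable (A : forall i : 'I_k, {ffun 'I_(m i).+2 -> S} -> R).
Hypothesis A0 : forall i z, 0 <= A i z.

Definition ct (u y : S) : R := \sum_i \sum_(xi : {ffun 'I_(m i).+1 -> S})
   A i (consf u xi) * \sum_(j < (m i).+2) ((consf u xi j == y)%:R).
Definition mass (u : S) : R := \sum_i \sum_(xi : {ffun 'I_(m i).+1 -> S}) A i (consf u xi).

Lemma consf0 n (u : S) (xi : {ffun 'I_n.+1 -> S}) : consf u xi ord0 = u.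
Proof. by rewrite /consf ffunE unlift_none. Qed.

Lemma consfS n (u : S) (xi : {ffun 'I_n.+1 -> S}) j : consf u xi (lift ord0 j) = xi j.
Proof. by rewrite /consf ffunE liftK. Qed.

Lemma cnt_split n (u y : S) (xi : {ffun 'I_n.+1 -> S}) :
  \sum_(j < n.+2) ((consf u xi j == y)%:R : R) = (u == y)%:R + \sum_(j < n.+1) (xi j == y)%:R.
Proof.
rewrite big_ord_recl consf0; congr (_ + _); apply: eq_bigr => j _; by rewrite consfS.
Qed.

Lemma aggAE i u y : aggA A i u y =
  \sum_(xi : {ffun 'I_(m i).+1 -> S}) A i (consf u xi) * \sum_(j < (m i).+1) (xi j == y)%:R.
Proof.
rewrite /aggA (eq_bigr (fun j => \sum_(xi : {ffun 'I_(m i).+1 -> S}) A i (consf u xi) * (xi j == y)%:R)).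
  by rewrite exchange_big; apply: eq_bigr => xi _; rewrite mulr_sumr.
move=> j _; rewrite big_mkcond; apply: eq_bigr => xi _.
by case: (xi j == y); rewrite ?mulr1 ?mulr0.
Qed.

Lemma AtotE u y : Atot A u y =
  \sum_i \sum_(xi : {ffun 'I_(m i).+1 -> S}) A i (consf u xi) * \sum_(j < (m i).+1) (xi j == y)%:R.
Proof. by apply: eq_bigr => i _; exact: aggAE. Qed.

Lemma Atot_ge0 u y : 0 <= Atot A u y.
Proof.
rewrite AtotE; apply: sumr_ge0 => i _; apply: sumr_ge0 => xi _.
by apply: mulr_ge0 => //; apply: sumr_ge0 => j _.
Qed.

Lemma gamma_ge0 : 0 <= gamma A.
Proof. exact: bigmax_ge_id. Qed.

Lemma row_le_gamma u : \sum_y Atot A u y <= gamma A.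
Proof. rewrite /gamma; exact: (le_bigmax _ (fun s => \sum_t Atot A s t) u). Qed.

Lemma mass_le_gamma u : mass u <= gamma A.
Proof.
apply: le_trans (row_le_gamma u).
have -> : \sum_y Atot A u y = \sum_i \sum_(xi : {ffun 'I_(m i).+1 -> S})
    A i (consf u xi) * ((m i).+1)%:R.
  under eq_bigr do rewrite AtotE.
  rewrite exchange_big; apply: eq_bigr => i _.
  rewrite exchange_big; apply: eq_bigr => xi _.
  rewrite -mulr_sumr; congr (_ * _).
  rewrite exchange_big /=.
  transitivity (\sum_(j < (m i).+1) (1 : R)).
    apply: eq_bigr => j _; rewrite (bigD1 (xi j)) //= eqxx big1 ?addr0 //.
    by move=> t /negbTE ne; rewrite eq_sym ne.
  by rewrite sumr_const card_ord.
apply: ler_sum => i _; apply: ler_sum => xi _.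
rewrite -[X in X <= _]mulr1; apply: ler_wpM2l => //; by rewrite ler1n.
Qed.

Lemma ct_ge0 u y : 0 <= ct u y.
Proof.
apply: sumr_ge0 => i _; apply: sumr_ge0 => xi _.
by apply: mulr_ge0 => //; apply: sumr_ge0 => j _.
Qed.

Lemma ctE u y : ct u y = (u == y)%:R * mass u + Atot A u y.
Proof.
rewrite /ct AtotE /mass mulr_sumr -big_split; apply: eq_bigr => i _.
rewrite mulr_sumr -big_split; apply: eq_bigr => xi _.
by rewrite cnt_split mulrDr mulrC.
Qed.

Lemma ct_le u y : ct u y <= w A y u.
Proof.
rewrite ctE /w /Bmat; apply: lerD => //.
by case: eqP => _; rewrite ?mul1r ?mul0r //; exact: mass_le_gamma.
Qed.

Lemma CT u (f : S -> R) :
  \sum_i \sum_(xi : {ffun 'I_(m i).+1 -> S}) A i (consf u xi) * \sum_(j < (m i).+2) f (consf u xi j)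
  = \sum_y ct u y * f y.
Proof.
have E (n : nat) (z : 'I_n -> S) : \sum_(j < n) f (z j) = \sum_y (\sum_(j < n) ((z j == y)%:R : R)) * f y.
  rewrite (eq_bigr (fun j => \sum_y ((z j == y)%:R : R) * f y)).
    by rewrite exchange_big; apply: eq_bigr => y _; rewrite mulr_suml.
  move=> j _; rewrite (bigD1 (z j)) //= eqxx mul1r big1 ?addr0 //.
  by move=> y /negbTE ne; rewrite eq_sym ne mul0r.
rewrite /ct (eq_bigr (fun i => \sum_y \sum_(xi : {ffun 'I_(m i).+1 -> S})
    A i (consf u xi) * (\sum_(j < (m i).+2) ((consf u xi j == y)%:R)) * f y)).
  by rewrite exchange_big /=; apply: eq_bigr => y _; rewrite mulr_suml; apply: eq_bigr => i _; rewrite mulr_suml.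
move=> i _; rewrite exchange_big; apply: eq_bigr => xi _.
by rewrite E mulr_sumr; apply: eq_bigr => y _; rewrite mulrA.
Qed.

End C.


Section W.
Local Open Scope classical_set_scope.
Context {R : realType} {S : finType} {k : nat} {m : 'I_k -> nat}.
Variable (A : forall i : 'I_k, {ffun 'I_(m i).+2 -> S} -> R).
Hypothesis A0 : forall i z, 0 <= A i z.

Lemma w_ge0 x y : (0 <= w A x y)%R.
Proof.
rewrite /w /Bmat; apply: addr_ge0; last exact: Atot_ge0.
by case: eqP => _ //; exact: gamma_ge0.
Qed.

Lemma walk_len_ge0 x p : (0 <= walk_len A x p)%R.
Proof. by apply: sumr_ge0 => e _; exact: w_ge0. Qed.

Lemma dist_ge0 a b : (0 <= dist A a b)%R.
Proof.
rewrite /dist; set D := [set L | _].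
case: (pselect (D !=set0)) => [ne|ne].
  by apply: lb_le_inf ne _ => L [p [_ _ ->]]; exact: walk_len_ge0.
have -> : D = set0.
  apply/seteqP; split => [L DL|L []]; exfalso; apply: ne; by exists L.
by rewrite inf0.
Qed.

Lemma dist_le a b p : path (fun a b => (0 < w A a b)%R) a p -> last a p = b ->
  (dist A a b <= walk_len A a p)%R.
Proof.
move=> Hp Hl; rewrite /dist; apply: ge_inf.
  by exists 0%R => L [q [_ _ ->]]; exact: walk_len_ge0.
by exists p.
Qed.

Lemma dist_self a : (dist A a a <= 0)%R.
Proof.
have := @dist_le a a [::] isT erefl.
by rewrite /walk_len /= big_nil.
Qed.

Lemma dist_le3 a b s t : (0 < w A a s)%R -> (0 < w A s t)%R -> (0 < w A t b)%R ->
  (dist A a b <= w3max A s t)%R.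
Proof.
move=> Ha Hs Hb.
have := @dist_le a b [:: s; t; b]; rewrite /= Ha Hs Hb => /(_ isT erefl) H.
apply: le_trans H _.
rewrite /walk_len /= !big_cons big_nil /= addr0 addrA.
rewrite /w3max.
rewrite (bigD1 a) //= le_max; apply/orP; left.
by rewrite (bigD1 b) //= le_max lexx.
Qed.


Lemma Wbound s t : (0 < w A s t)%R -> (0 < w3max A s t)%R ->
  (\sum_y w A y s * w A t y <=
   wout A t * win A s * (1 - w A s t / w3max A s t * (1 - curv A s t)))%R.
Proof.
move=> Hst HM.
have Alg u v : (Atot A u v <= gamma A)%R.
  apply: le_trans (row_le_gamma A u).
  rewrite (bigD1 v) //= lerDl; apply: sumr_ge0 => y _; exact: Atot_ge0.
have g0 : (0 < gamma A)%R.
  rewrite lt_def gamma_ge0 // andbT; apply/eqP => g0.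
  have := Alg t s; rewrite g0 => h.
  move: Hst; rewrite /w /Bmat g0 if_same add0r.
  by move=> /lt_le_trans /(_ h); rewrite ltxx.
have ws u : (gamma A <= w A u u)%R.
  by rewrite /w /Bmat eqxx lerDl; exact: Atot_ge0.
have Wi0 : (0 < win A s)%R.
  rewrite /win (bigD1 s) //=; apply: (lt_le_trans g0); apply: le_trans (ws s) _.
  by rewrite lerDl; apply: sumr_ge0 => x _; exact: w_ge0.
have Wo0 : (0 < wout A t)%R.
  rewrite /wout (bigD1 t) //=; apply: (lt_le_trans g0); apply: le_trans (ws t) _.
  by rewrite lerDl; apply: sumr_ge0 => x _; exact: w_ge0.
have mi_sum : (\sum_x mu_in A s x = 1)%R.
  by rewrite /mu_in -mulr_suml divff // gt_eqF.
have mo_sum : (\sum_x mu_out A t x = 1)%R.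
  by rewrite /mu_out -mulr_suml divff // gt_eqF.
have mi0 x : (0 <= mu_in A s x)%R by apply: divr_ge0; [exact: w_ge0 | exact: ltW].
have mo0 x : (0 <= mu_out A t x)%R by apply: divr_ge0; [exact: w_ge0 | exact: ltW].
set M := w3max A s t.
set W := wass A (mu_in A s) (mu_out A t).
pose pi a b := (mu_in A s a * mu_out A t b)%R.
have pi0 a b : (0 <= pi a b)%R by apply: mulr_ge0.
have cp : coupling pi (mu_in A s) (mu_out A t).
  split => //.
    by move=> a; rewrite /pi -mulr_sumr mo_sum mulr1.
  by move=> b; rewrite /pi -mulr_suml mi_sum mul1r.
have W1 : (W <= \sum_a \sum_b pi a b * dist A a b)%R.
  rewrite /W /wass; apply: ge_inf.
    exists 0%R => c [pi' [[pi'0 _ _] ->]].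
    apply: sumr_ge0 => a _; apply: sumr_ge0 => b _; apply: mulr_ge0 => //; exact: dist_ge0.
  by exists pi.
have step a : (\sum_b pi a b * dist A a b <= M * (mu_in A s a - mu_in A s a * mu_out A t a))%R.
  have -> : (mu_in A s a - mu_in A s a * mu_out A t a = \sum_(b | b != a) pi a b)%R.
    rewrite /pi -mulr_sumr -{1}(mulr1 (mu_in A s a)) -mulrBr; congr (_ * _)%R.
    by rewrite -mo_sum (bigD1 a) //= addrC addrK.
  rewrite (bigD1 a) //= mulr_sumr -[X in (_ <= X)%R]add0r; apply: lerD.
    by apply: mulr_ge0_le0 => //; exact: dist_self.
  apply: ler_sum => b ne; rewrite mulrC.
  have := pi0 a b; rewrite le_eqVlt => /orP [/eqP <-|pos]; first by rewrite !mulr0.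
  apply: ler_wpM2r; first exact: ltW.
  have was : (0 < w A a s)%R.
    rewrite lt_def w_ge0 // andbT; apply: contraTneq pos => e.
    by rewrite /pi /mu_in e mul0r mul0r ltxx.
  have wtb : (0 < w A t b)%R.
    rewrite lt_def w_ge0 // andbT; apply: contraTneq pos => e.
    by rewrite /pi /mu_out e mul0r mulr0 ltxx.
  exact: dist_le3.
have key : (W <= M * (1 - \sum_y mu_in A s y * mu_out A t y))%R.
  apply: le_trans W1 _; apply: le_trans (ler_sum _ (fun a _ => step a)) _.
  by rewrite -mulr_sumr sumrB mi_sum.
have -> : (1 - curv A s t = W / w A s t)%R by rewrite /curv -/W; ring.
have -> : (w A s t / M * (W / w A s t) = W / M)%R.
  by field; rewrite ?gt_eqF.
have -> : (\sum_y w A y s * w A t y =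
           wout A t * win A s * \sum_y mu_in A s y * mu_out A t y)%R.
  rewrite mulr_sumr; apply: eq_bigr => y _; rewrite /mu_in /mu_out.
  by field; rewrite ?gt_eqF.
apply: ler_wpM2l; first by apply: mulr_ge0; exact: ltW.
have : (W / M <= 1 - \sum_y mu_in A s y * mu_out A t y)%R.
  by rewrite ler_pdivrMr // mulrC.
lra.
Qed.

End W.


Theorem mainTheorem4 (R : realType) (S : finType) (k : nat) (m : 'I_k -> nat)
  (Rel : forall i : 'I_k, pred {ffun 'I_(m i).+2 -> S})
  (A : forall i : 'I_k, {ffun 'I_(m i).+2 -> S} -> R)
  (p : nat -> nat) (q : nat -> 'I_k -> nat)
  (psi : forall (l : nat) (i : 'I_k), ('I_(m i).+2 -> 'rV[R]_(p l)) -> 'rV[R]_(q l i))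
  (phi : forall l : nat, (forall i : 'I_k, 'rV[R]_(q l i)) -> 'rV[R]_(p l.+1))
  (alpha : nat -> R) (betai : nat -> 'I_k -> R) :
  (* shift operators: nonnegative, supported on the relations *)
  (forall i z, 0 <= A i z) ->
  (forall i z, z \notin Rel i -> A i z = 0) ->
  (* Bounded Jacobians: differentiability (jointly in all arguments) *)
  (forall l i (M : 'M[R]_((m i).+2, p l)),
      differentiable (fun M' : 'M[R]_((m i).+2, p l) => psi l i (fun j => row j M')) M) ->
  (forall l (M : 'rV[R]_(\sum_(i < k) q l i)),
      differentiable (fun M' : 'rV[R]_(\sum_(i < k) q l i) =>
        phi l (fun i => @submxrow R k (q l) 1 M' i)) M) ->
  (* Bounded Jacobians: bounds on the Jacobians w.r.t. each argument *)
  (forall l i (a : 'I_(m i).+2 -> 'rV[R]_(p l)) (j : 'I_(m i).+2),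
      norm1 (jac (fun v => psi l i (upd a j v)) (a j)) <= betai l i) ->
  (forall l (a : forall i : 'I_k, 'rV[R]_(q l i)) (i : 'I_k),
      norm1 (jac (fun v => phi l (@dfwith 'I_k (fun i0 => 'rV[R]_(q l i0)) a i v)) (a i))
        <= alpha l) ->
  forall s t : S,
  0 < w A s t ->
  0 < w3max A s t ->
  forall x : S -> 'rV[R]_(p 0%N),
  norm1 (jac (fun v => feat A psi phi (upd x t v) 2 s) (x t))
    <= (\prod_(l < 2) (alpha l * \big[Num.max/0]_(i < k) betai l i))
       * wout A t * win A s
       * (1 - w A s t / w3max A s t * (1 - curv A s t)).
Proof.
move=> HA0 HArel Hdpsi Hdphi Hbpsi Hbphi s t Hst HM x.
have kpos : (0 < k)%N.
  case: (posnP k) => // k0; exfalso.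
  have At0 u v : Atot A u v = 0.
    by rewrite /Atot big1 // => -[j hj] _; exfalso; move: hj; rewrite k0.
  have g0 : gamma A <= 0.
    apply: bigmax_le => // u _; rewrite big1 // => v _; exact: At0.
  move: Hst; rewrite /w /Bmat At0 addr0; case: eqP => _; last by rewrite ltxx.
  by move=> /lt_le_trans /(_ g0); rewrite ltxx.
pose i0 : 'I_k := Ordinal kpos.
have n1ge0 a b (M : 'M[R]_(a, b)) : 0 <= norm1 M by exact: bigmax_ge_id.
have al0 l : 0 <= alpha l := le_trans (n1ge0 _ _ _) (Hbphi l (fun _ => 0) i0).
have be0 l i : 0 <= betai l i := le_trans (n1ge0 _ _ _) (Hbpsi l i (fun _ => 0) ord0).
pose bm l := \big[Num.max/0]_(i < k) betai l i.
have bm0 l : 0 <= bm l by exact: bigmax_ge_id.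
have Bpsi l i a j : norm1 (jac (fun v => psi l i (upd a j v)) (a j)) <= bm l.
  apply: le_trans (Hbpsi l i a j) _.
  by rewrite /bm (bigD1 i) //= le_max lexx.
pose g0 := fun (u : S) (v : 'rV[R]_(p 0%N)) => upd x t v u.
pose K0 := fun u : S => ((u == t)%:R : R).
have K0ge0 u : 0 <= K0 u by rewrite /K0 ler0n.
have dg0 u : differentiable (g0 u) (x t) /\ forall h, n1 ('d (g0 u) (x t) h) <= K0 u * n1 h.
  case: (eqVneq u t) => [->|ne].
    have -> : g0 t = (idfun : 'rV[R]_(p 0%N) -> _).
      by apply: funext => v; rewrite /g0 /upd eqxx.
    split; first by apply: linear_differentiable; exact: lin_cont.
    move=> h; rewrite diff_lin; last exact: lin_cont.
    by rewrite /K0 eqxx mul1r.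
  have -> : g0 u = cst (x u).
    by apply: funext => v; rewrite /g0 /upd (negbTE ne).
  split; first exact: differentiable_cst.
  move=> h; rewrite diff_cst /K0 (negbTE ne) mul0r.
  by rewrite le_eqVlt; apply/orP; left; apply/eqP; exact: n10.
have L1 u := @LAYER R S k m A p q psi phi 0%N (alpha 0%N) (fun _ => bm 0%N) _ g0 K0 (x t) u
  HA0 (Hdpsi 0%N) (Hdphi 0%N) (fun i => Bpsi 0%N i) (Hbphi 0%N) (al0 0%N) (fun _ => bm0 0%N)
  K0ge0 (fun u => (dg0 u).1) (fun u => (dg0 u).2).
pose g1 := fun (u : S) (v : 'rV[R]_(p 0%N)) => feat A psi phi (upd x t v) 1 u.
pose K1 := fun u : S => alpha 0%N * (\sum_i \sum_(xi : {ffun 'I_(m i).+1 -> S})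
                 A i (consf u xi) * (bm 0%N * \sum_j K0 (consf u xi j))).
have K1ge0 u : 0 <= K1 u.
  apply: mulr_ge0 => //; apply: sumr_ge0 => i _; apply: sumr_ge0 => xi _.
  apply: mulr_ge0 => //; apply: mulr_ge0 => //; apply: sumr_ge0 => j _; exact: K0ge0.
have dg1 u : differentiable (g1 u) (x t) := (L1 u).1.
have bg1 u h : n1 ('d (g1 u) (x t) h) <= K1 u * n1 h := (L1 u).2 h.
have L2 := @LAYER R S k m A p q psi phi 1%N (alpha 1%N) (fun _ => bm 1%N) _ g1 K1 (x t) s
  HA0 (Hdpsi 1%N) (Hdphi 1%N) (fun i => Bpsi 1%N i) (Hbphi 1%N) (al0 1%N) (fun _ => bm0 1%N)
  K1ge0 dg1 bg1.
set C := alpha 1%N * _ in L2.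
have C0 : 0 <= C.
  apply: mulr_ge0 => //; apply: sumr_ge0 => i _; apply: sumr_ge0 => xi _.
  apply: mulr_ge0 => //; apply: mulr_ge0 => //; apply: sumr_ge0 => j _; exact: K1ge0.
have J : norm1 (jac (fun v => feat A psi phi (upd x t v) 2 s) (x t)) <= C := @le_jac _ _ _ _ _ C0 L2.2.
apply: le_trans J _.
have pull u (c : R) (f : S -> R) :
    \sum_i \sum_(xi : {ffun 'I_(m i).+1 -> S}) A i (consf u xi) * (c * \sum_j f (consf u xi j))
    = c * \sum_y ct A u y * f y.
  rewrite -(CT A u f) mulr_sumr; apply: eq_bigr => i _; rewrite mulr_sumr.
  by apply: eq_bigr => xi _; rewrite mulrCA.
have K1E u : K1 u = alpha 0%N * bm 0%N * ct A u t.
  rewrite /K1 pull -mulrA; congr (_ * (_ * _)).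
  rewrite (bigD1 t) //= /K0 eqxx mulr1 big1 ?addr0 // => y /negbTE ne.
  by rewrite ne mulr0.
have CE : C = alpha 0%N * bm 0%N * (alpha 1%N * bm 1%N) * \sum_y ct A s y * ct A y t.
  rewrite /C pull (eq_bigr (fun y => alpha 0%N * bm 0%N * (ct A s y * ct A y t))).
    by rewrite -mulr_sumr; ring.
  by move=> y _; rewrite K1E mulrCA.
have PE : \prod_(l < 2) (alpha l * \big[Num.max/0]_(i < k) betai l i) =
    alpha 0%N * bm 0%N * (alpha 1%N * bm 1%N).
  by rewrite !big_ord_recl big_ord0 mulr1.
rewrite CE PE -!mulrA; apply: ler_wpM2l; first exact: al0.
apply: ler_wpM2l; first exact: bm0.
apply: ler_wpM2l; first exact: al0.
apply: ler_wpM2l; first exact: bm0.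
apply: le_trans (_ : _ <= \sum_y w A y s * w A t y) _.
  apply: ler_sum => y _; apply: ler_pM; [exact: ct_ge0 | exact: ct_ge0 | exact: ct_le | exact: ct_le].
apply: le_trans (Wbound A HA0 s t Hst HM) _.
by rewrite le_eqVlt; apply/orP; left; apply/eqP; ring.
Qed.
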